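(* Let $\mathbf v\in\mathbb R^{n\times m}_{<0}$ and $\mathbf b\in\mathbb R^n_{<0}$. The number of faces of the Pareto frontier of $\mathcal U(\mathbf v)$ and the number of competitive utility profiles $|\mathrm{CU}(\mathbf v,\mathbf b)|$ are both at most $(2m+1)^{n(n-1)/2}$.
   Context: Setup: agents $[n]$, chores $[m]$, allocations $\mathbf z\in\mathbb R^{n\times m}_{\ge0}$ with column sums $1$, $u_i(\mathbf z_i)=\sum_jv_{i,j}z_{i,j}$, $\mathcal U(\mathbf v)=\{\mathbf u(\mathbf z)\}$. A face of the Pareto frontier is a set $\arg\max_{\mathbf u\in\mathcal U(\mathbf v)}\langle\tau,\mathbf u\rangle$ for some $\tau\in\mathbb R^n_{>0}$. Competitive allocation for budgets $\mathbf b$: there exist prices $\mathbf p\in\mathbb R^m_{<0}$ such that each $\mathbf z_i$ maximizes $u_i$ over bundles $\mathbf x\in\mathbb R^m_{\ge0}$ with $\sum_jp_jx_j\le b_i$; $\mathrm{CU}(\mathbf v,\mathbf b)$ is the set of utility profiles of competitive allocations. *)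

(* Defs.v *)
From HB Require Import structures.
From mathcomp Require Import all_boot all_order all_algebra.
Set Implicit Arguments. Unset Strict Implicit. Unset Printing Implicit Defensive.
Import Order.TTheory GRing.Theory Num.Theory.
Local Open Scope ring_scope.

Section Chores.
Variables (R : realFieldType) (n m : nat).

(* z : allocation matrix, z i j = fraction of chore j given to agent i *)
Definition is_alloc (z : 'M[R]_(n, m)) : Prop :=
  (forall i j, 0 <= z i j) /\ (forall j, \sum_(i < n) z i j = 1).

Definition util_bundle (v : 'M[R]_(n, m)) (i : 'I_n) (x : 'rV[R]_m) : R :=
  \sum_(j < m) v i j * x ord0 j.

Definition util (v : 'M[R]_(n, m)) (z : 'M[R]_(n, m)) : 'rV[R]_n :=
  \row_(i < n) \sum_(j < m) v i j * z i j.

Definition Uset (v : 'M[R]_(n, m)) (u : 'rV[R]_n) : Prop :=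
  exists z, is_alloc z /\ u = util v z.

Definition dotv (t u : 'rV[R]_n) : R := \sum_(i < n) t ord0 i * u ord0 i.

Definition face_of (v : 'M[R]_(n, m)) (tau : 'rV[R]_n) (u : 'rV[R]_n) : Prop :=
  Uset v u /\ forall u', Uset v u' -> dotv tau u' <= dotv tau u.

(* a face of the Pareto frontier: face_of v tau for some strictly positive tau *)
Definition pos_vec (tau : 'rV[R]_n) : Prop := forall i, 0 < tau ord0 i.

Definition competitive (v : 'M[R]_(n, m)) (b : 'rV[R]_n) (z : 'M[R]_(n, m)) : Prop :=
  is_alloc z /\
  exists p : 'rV[R]_m, (forall j, p ord0 j < 0) /\
    forall i : 'I_n,
      (forall j, 0 <= z i j) /\
      \sum_(j < m) p ord0 j * z i j <= b ord0 i /\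
      (forall x : 'rV[R]_m, (forall j, 0 <= x ord0 j) ->
          \sum_(j < m) p ord0 j * x ord0 j <= b ord0 i ->
          util_bundle v i x <= \sum_(j < m) v i j * z i j).

Definition CU (v : 'M[R]_(n, m)) (b : 'rV[R]_n) (u : 'rV[R]_n) : Prop :=
  exists z, competitive v b z /\ u = util v z.

End Chores.

(* Main.v *)
Require Import Defs.
From HB Require Import structures.
From mathcomp Require Import all_boot all_order all_algebra.
From mathcomp Require Import ring lra.
Import Order.TTheory GRing.Theory Num.Theory.
Set Implicit Arguments. Unset Strict Implicit. Unset Printing Implicit Defensive.
Local Open Scope ring_scope.

Lemma sum_delta (R : realFieldType) p (F : 'I_p -> R) j :
  \sum_(b < p) F b * (b == j)%:R = F j.
Proof.
rewrite (bigD1 j) //= eqxx mulr1 big1 ?addr0 // => b /negbTE ->; by rewrite mulr0.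
Qed.

Definition Phi (R : realFieldType) n m (v : 'M[R]_(n, m)) (tau : 'rV[R]_n)
  (z : 'M[R]_(n, m)) : R :=
  \sum_(i < n) \sum_(j < m) tau ord0 i * v i j * z i j.

Lemma dotv_util (R : realFieldType) n m (v : 'M[R]_(n, m)) tau z :
  dotv tau (util v z) = Phi v tau z.
Proof.
rewrite /dotv /Phi; apply: eq_bigr => i _; rewrite mxE mulr_sumr.
by apply: eq_bigr => j _; rewrite mulrA.
Qed.

Definition Ssupp (R : realFieldType) n m (v : 'M[R]_(n, m)) (tau : 'rV[R]_n)
  (z : 'M[R]_(n, m)) : Prop :=
  forall i j, 0 < z i j -> forall k, tau ord0 k * v k j <= tau ord0 i * v i j.

Lemma S_max (R : realFieldType) n m (v : 'M[R]_(n, m)) tau z z' :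
  is_alloc z -> is_alloc z' -> Ssupp v tau z -> Phi v tau z' <= Phi v tau z.
Proof.
move=> [z0 z1] [z'0 z'1] S.
rewrite /Phi exchange_big [X in _ <= X]exchange_big /=.
apply: ler_sum => j _.
have -> : \sum_(k < n) tau ord0 k * v k j * z' k j =
   \sum_(k < n) \sum_(i < n) z' k j * z i j * (tau ord0 k * v k j).
  apply: eq_bigr => k _; rewrite -mulr_suml -mulr_sumr z1 mulr1.
  by rewrite mulrC.
have -> : \sum_(i < n) tau ord0 i * v i j * z i j =
   \sum_(k < n) \sum_(i < n) z' k j * z i j * (tau ord0 i * v i j).
  rewrite exchange_big /=; apply: eq_bigr => i _.
  by rewrite -mulr_suml -mulr_suml z'1 mul1r mulrC.
apply: ler_sum => k _; apply: ler_sum => i _.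
have := z0 i j; rewrite le_eqVlt => /orP [/eqP <-|hz]; first by rewrite !mulr0 !mul0r.
apply: ler_wpM2l; first by apply: mulr_ge0.
exact: S.
Qed.

Lemma max_S (R : realFieldType) n m (v : 'M[R]_(n, m)) tau z :
  is_alloc z -> (forall z', is_alloc z' -> Phi v tau z' <= Phi v tau z) ->
  Ssupp v tau z.
Proof.
move=> [z0 z1] Hmax i j hz k; rewrite leNgt; apply/negP => hlt.
have hik : i != k by apply: contraTneq hlt => ->; rewrite ltxx.
pose c := z i j.
pose D : 'M[R]_(n, m) := \matrix_(a, b) ((b == j)%:R * ((a == k)%:R - (a == i)%:R)).
pose z' := z + c *: D.
have Ez a b : z' a b = z a b + c * ((b == j)%:R * ((a == k)%:R - (a == i)%:R)).
  by rewrite /z' !mxE.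
have al : is_alloc z'.
  split.
    move=> a b; rewrite Ez.
    have [->|] := eqVneq b j; last by rewrite mul0r mulr0 addr0.
    rewrite mul1r.
    have [->|hak] := eqVneq a k.
      by rewrite eq_sym (negbTE hik) subr0 mulr1 addr_ge0 // ltW.
    have [->|hai] := eqVneq a i; first by rewrite sub0r mulrN1 subrr.
    by rewrite subrr mulr0 addr0.
  move=> b; rewrite (eq_bigr (fun a => z a b + c * ((b == j)%:R * ((a == k)%:R - (a == i)%:R)))); last by move=> a _; rewrite Ez.
  rewrite big_split /= z1 -mulr_sumr -mulr_sumr sumrB.
  have sd (x : 'I_n) : \sum_(a < n) (a == x)%:R = 1 :> R.
    by rewrite (bigD1 x) //= eqxx big1 ?addr0 // => a /negbTE ->.
  by rewrite !sd subrr mulr0 mulr0 addr0.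
have := Hmax _ al.
have -> : Phi v tau z' = Phi v tau z + c * (tau ord0 k * v k j - tau ord0 i * v i j).
  rewrite /Phi.
  under eq_bigr do under eq_bigr do rewrite Ez mulrDr.
  under eq_bigr do rewrite big_split /=.
  rewrite big_split /=; congr (_ + _).
  have row (a : 'I_n) : \sum_(b < m) tau ord0 a * v a b * (c * ((b == j)%:R * ((a == k)%:R - (a == i)%:R)))
      = (tau ord0 a * v a j * c) * (a == k)%:R - (tau ord0 a * v a j * c) * (a == i)%:R.
    transitivity (\sum_(b < m) (tau ord0 a * v a b * c * ((a == k)%:R - (a == i)%:R)) * (b == j)%:R).
      by apply: eq_bigr => b _; ring.
    by rewrite (sum_delta (fun b => tau ord0 a * v a b * c * ((a == k)%:R - (a == i)%:R))) mulrBr.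
  under eq_bigr do rewrite row.
  rewrite sumrB (sum_delta (fun a => tau ord0 a * v a j * c)).
  rewrite (sum_delta (fun a => tau ord0 a * v a j * c)).
  by rewrite mulrBr !(mulrC c).
rewrite -subr_ge0 opprD addrA subrr add0r oppr_ge0 => H.
have : 0 < c * (tau ord0 k * v k j - tau ord0 i * v i j).
  by apply: mulr_gt0 => //; rewrite subr_gt0.
by rewrite ltNge H.
Qed.

Lemma face_S (R : realFieldType) n m (v : 'M[R]_(n, m)) tau u :
  face_of v tau u <-> exists z, [/\ is_alloc z, u = util v z & Ssupp v tau z].
Proof.
split.
  move=> [[z [az ->]] Hm]; exists z; split => //.
  apply: max_S => // z' az'; rewrite -!dotv_util; apply: Hm; by exists z'.
move=> [z [az -> S]]; split; first by exists z.
move=> u' [z' [az' ->]]; rewrite !dotv_util; exact: S_max.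
Qed.

Lemma face_eq (R : realFieldType) n m (v : 'M[R]_(n, m)) (tau tau' : 'rV[R]_n) :
  (forall k i j, (tau ord0 k * v k j <= tau ord0 i * v i j) =
                 (tau' ord0 k * v k j <= tau' ord0 i * v i j)) ->
  forall u, face_of v tau u <-> face_of v tau' u.
Proof.
move=> H u; rewrite !face_S; split => -[z [az eu S]]; exists z; split => //.
  by move=> i j hz k; rewrite -H; apply: S.
by move=> i j hz k; rewrite H; apply: S.
Qed.

Definition gcnt (R : realFieldType) m (c : 'I_m -> R) (r : R) : nat :=
  addn #|[pred j | c j < r]| #|[pred j | c j <= r]|.

Lemma gcnt_le (R : realFieldType) m (c : 'I_m -> R) r : (gcnt c r < 2 * m + 1)%N.
Proof.
rewrite /gcnt addn1 ltnS mul2n -addnn.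
by apply: leq_add; apply: leq_trans (max_card _) _; rewrite card_ord.
Qed.

Lemma gcnt_eq (R : realFieldType) m (c : 'I_m -> R) r r' :
  gcnt c r = gcnt c r' -> forall j, (c j < r) = (c j < r') /\ (c j <= r) = (c j <= r').
Proof.
wlog hr : r r' / r <= r'.
  move=> W H j; have [h|h] := leP r r'; first exact: W.
  by have [] := W r' r (ltW h) (esym H) j.
move=> H.
have s1 : [pred j | c j < r] \subset [pred j | c j < r'].
  by apply/subsetP => j; rewrite !inE => h; apply: lt_le_trans h hr.
have s2 : [pred j | c j <= r] \subset [pred j | c j <= r'].
  by apply/subsetP => j; rewrite !inE => h; apply: le_trans h hr.
have l1 := subset_leqif_card s1; have l2 := subset_leqif_card s2.
move: H; rewrite /gcnt => H.
have a1 := l1.1; have a2 := l2.1.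
move: (#|[pred j | (c j < r)%R]|) (#|[pred j | (c j < r')%R]|)
  (#|[pred j | (c j <= r)%R]|) (#|[pred j | (c j <= r')%R]|) l1 l2 a1 a2 H
  => A A' B B' l1 l2 a1 a2 H.
have e1 : A = A' by apply/eqP; rewrite eqn_leq a1 /= -(leq_add2r B) H leq_add2l.
have e2 : B = B' by apply/eqP; rewrite -(eqn_add2l A) H e1.
move=> j; split.
  apply/idP/idP => h; first exact: lt_le_trans h hr.
  move: l1 => [_]; rewrite e1 eqxx => /esym /subsetP /(_ j); rewrite !inE; apply => //.
apply/idP/idP => h; first exact: le_trans h hr.
move: l2 => [_]; rewrite e2 eqxx => /esym /subsetP /(_ j); rewrite !inE; apply => //.
Qed.

Lemma cmp_ratio (R : realFieldType) (ti tk vi vk : R) :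
  0 < ti -> 0 < tk -> vi < 0 ->
  ((ti * vi <= tk * vk) = (vk / vi <= ti / tk)) /\
  ((ti * vi < tk * vk) = (vk / vi < ti / tk)).
Proof.
move=> hti htk hvi.
have hvi0 : vi != 0 by rewrite lt_eqF.
have e1 : ti * vi = (ti / tk) * vi * tk.
  by rewrite mulrAC divfK // gt_eqF.
have e2 : vk = (vk / vi) * vi by rewrite divfK.
rewrite e1 [X in tk * X]e2 (mulrC tk) ler_pM2r // ltr_pM2r // ler_nM2r // ltr_nM2r //.
Qed.

Definition Dom n := {t : 2.-tuple 'I_n | sorted ltn [seq val i | i <- t]}.

Definition key (R : realFieldType) n m (v : 'M[R]_(n, m)) (tau : 'rV[R]_n)
  : {ffun Dom n -> 'I_(2 * m).+1} :=
  [ffun t : Dom n => inord (gcnt (fun j => v (tnth (val t) 1) j / v (tnth (val t) 0) j)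
      (tau ord0 (tnth (val t) 0) / tau ord0 (tnth (val t) 1)))].

Lemma card_Dom n : #|{: Dom n}| = ((n * (n - 1)) %/ 2)%N.
Proof.
rewrite card_sig divn2 subn1 -bin2 -(card_ltn_sorted_tuples 2 n) cardsE.
by apply: eq_card => t; rewrite !inE.
Qed.

Lemma key_cmp (R : realFieldType) n m (v : 'M[R]_(n, m)) (tau tau' : 'rV[R]_n) :
  (forall i j, v i j < 0) -> pos_vec tau -> pos_vec tau' -> key v tau = key v tau' ->
  forall k i j, (tau ord0 k * v k j <= tau ord0 i * v i j) =
                (tau' ord0 k * v k j <= tau' ord0 i * v i j).
Proof.
move=> hv pt pt' hk k i j.
have main (a b : 'I_n) (hab : (a < b)%N) :
    gcnt (fun j => v b j / v a j) (tau ord0 a / tau ord0 b) =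
    gcnt (fun j => v b j / v a j) (tau' ord0 a / tau' ord0 b).
  have ht : sorted ltn [seq val x | x <- [tuple a; b]] by rewrite /= hab.
  pose t : Dom n := exist _ [tuple a; b] ht.
  have := congr1 (fun f : {ffun Dom n -> 'I_(2 * m).+1} => val (f t)) hk.
  by rewrite /key !ffunE /= !inordK // (leq_trans (gcnt_le _ _)) // addn1.
case: (ltngtP k i) => h.
- have [_ e] := gcnt_eq (main k i h) j.
  by rewrite (cmp_ratio (v i j) (pt k) (pt i) (hv k j)).1 (cmp_ratio (v i j) (pt' k) (pt' i) (hv k j)).1.
- have [e _] := gcnt_eq (main i k h) j.
  by rewrite !leNgt (cmp_ratio (v k j) (pt i) (pt k) (hv i j)).2 (cmp_ratio (v k j) (pt' i) (pt' k) (hv i j)).2 e.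
- have ki : k = i by apply: val_inj; exact: h.
  by rewrite ki !lexx.
Qed.

Lemma negdiv_gt0 (R : realFieldType) (a b : R) : a < 0 -> b < 0 -> 0 < a / b.
Proof.
move=> ha hb; rewrite -mulrNN -invrN; apply: divr_gt0; by rewrite oppr_gt0.
Qed.

Lemma agent (R : realFieldType) m (vi p zi : 'I_m -> R) (bi : R) :
  (forall j, vi j < 0) -> (forall j, p j < 0) -> bi < 0 -> (forall j, 0 <= zi j) ->
  \sum_(j < m) p j * zi j <= bi ->
  (forall x : 'rV[R]_m, (forall j, 0 <= x ord0 j) -> \sum_(j < m) p j * x ord0 j <= bi ->
      \sum_(j < m) vi j * x ord0 j <= \sum_(j < m) vi j * zi j) ->
  exists al, [/\ 0 < al, (forall j, al <= vi j / p j),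
     (forall j, 0 < zi j -> vi j = al * p j) & \sum_(j < m) vi j * zi j = al * bi].
Proof.
move=> hv hp hb hz hS hopt.
case: m vi p zi hv hp hz hS hopt => [|m] vi p zi hv hp hz hS hopt.
  by move: hS; rewrite big_ord0 leNgt hb.
have [js _ hmin] := @arg_minP _ _ _ ord0 predT (fun j => vi j / p j) isT.
set al := vi js / p js in hmin *.
have hal : 0 < al by apply: negdiv_gt0.
have hmin' j : al <= vi j / p j by apply: hmin.
pose x : 'rV[R]_m.+1 := \row_j ((bi / p js) * (j == js)%:R).
have hpj0 : p js != 0 by rewrite lt_eqF.
have h1 : al * bi <= \sum_j vi j * zi j.
  have := hopt x.
  have e1 : \sum_j p j * x ord0 j = bi.
    rewrite -[RHS](divfK hpj0) mulrC -(sum_delta (fun j => p j * (bi / p js)) js).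
    by apply: eq_bigr => j _; rewrite mxE mulrA.
  have e2 : \sum_j vi j * x ord0 j = al * bi.
    rewrite /al mulrAC -mulrA -(sum_delta (fun j => vi j * (bi / p js)) js).
    by apply: eq_bigr => j _; rewrite mxE mulrA.
  rewrite e1 e2; apply => // j; rewrite mxE; apply: mulr_ge0; last exact: ler0n.
  by apply/ltW/negdiv_gt0.
have T0 j : 0 <= (al * p j - vi j) * zi j.
  apply: mulr_ge0 => //.
  have -> : vi j = vi j / p j * p j by rewrite divfK // lt_eqF.
  by rewrite -mulrBl; apply: mulr_le0; [rewrite subr_le0 | apply: ltW].
have h2 : \sum_j vi j * zi j <= al * \sum_j p j * zi j.
  rewrite -subr_ge0 mulr_sumr -sumrB; apply: sumr_ge0 => j _.
  by rewrite mulrA -mulrBl.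
have h3 : al * \sum_j p j * zi j <= al * bi by rewrite ler_pM2l.
have eU : \sum_j vi j * zi j = al * bi by apply/eqP; rewrite eq_le h1 (le_trans h2 h3).
have eS : \sum_j (al * p j - vi j) * zi j = 0.
  have -> : \sum_j (al * p j - vi j) * zi j = al * \sum_j p j * zi j - \sum_j vi j * zi j.
    by rewrite mulr_sumr -sumrB; apply: eq_bigr => j _; rewrite mulrBl mulrA.
  by apply/eqP; rewrite subr_eq0 eq_le h2 eU h3.
exists al; split => // j hzj.
have /eqP := @psumr_eq0P _ _ predT _ (fun j _ => T0 j) eS j isT.
rewrite mulf_eq0 (gt_eqF hzj) orbF subr_eq0 => /eqP.
by move=> ->.
Qed.

Lemma comp_tau (R : realFieldType) n m (v : 'M[R]_(n, m)) (b : 'rV[R]_n) z :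
  (forall i j, v i j < 0) -> (forall i, b ord0 i < 0) -> competitive v b z ->
  exists tau, [/\ pos_vec tau, Ssupp v tau z &
     forall i, tau ord0 i * util v z ord0 i = b ord0 i].
Proof.
move=> hv hb [az [p [hp H]]].
have : forall i, exists al, [/\ 0 < al, (forall j, al <= v i j / p ord0 j),
     (forall j, 0 < z i j -> v i j = al * p ord0 j) & \sum_(j < m) v i j * z i j = al * b ord0 i].
  move=> i; have [h1 [h2 h3]] := H i.
  by apply: (agent (hv i) hp (hb i) h1 h2) => x hx hs; apply: h3.
case/fin_all_exists => al hal.
exists (\row_i (al i)^-1); split.
- by move=> i; rewrite mxE invr_gt0; have [] := hal i.
- move=> i j hz k; rewrite !mxE.
  have [ai _ hi _] := hal i; have [ak hk _ _] := hal k.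
  rewrite (hi j hz) mulKf ?gt_eqF // mulrC ler_pdivrMr //.
  have hpj := hp j.
  have e : v k j = v k j / p ord0 j * p ord0 j by rewrite divfK // lt_eqF.
  by rewrite [X in X <= _]e (mulrC (p ord0 j) (al k)) ler_nM2r.
- move=> i; have [ai _ _ hu] := hal i.
  by rewrite !mxE hu mulKf ?gt_eqF.
Qed.

Definition Good (R : realFieldType) n m (v : 'M[R]_(n, m)) (b : 'rV[R]_n) (t u : 'rV[R]_n) :=
  exists tau, [/\ pos_vec tau, (forall w, face_of v tau w <-> face_of v t w),
     face_of v tau u & forall i, tau ord0 i * u ord0 i = b ord0 i].

Lemma quad (R : realFieldType) (x y B : R) : 0 < x -> 0 < y -> B < 0 ->
  x * (B / y) + y * (B / x) - 2 * B = B * ((x - y) ^+ 2 / (x * y)).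
Proof.
move=> hx hy hB; field; by rewrite ?gt_eqF.
Qed.

Lemma good_uniq (R : realFieldType) n m (v : 'M[R]_(n, m)) (b : 'rV[R]_n) t u u' :
  (forall i, b ord0 i < 0) -> Good v b t u -> Good v b t u' -> u = u'.
Proof.
move=> hb [tau [pt ft fu eu]] [tau' [pt' ft' fu' eu']].
have fu2 : face_of v tau' u by apply/(ft' u)/(ft u).
have fu2' : face_of v tau u' by apply/(ft u')/(ft' u').
have d1 : dotv tau u' = dotv tau u.
  by apply/eqP; rewrite eq_le (fu.2 _ fu2'.1) (fu2'.2 _ fu.1).
have d2 : dotv tau' u = dotv tau' u'.
  by apply/eqP; rewrite eq_le (fu'.2 _ fu2.1) (fu2.2 _ fu'.1).
have Eu i : u ord0 i = b ord0 i / tau ord0 i.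
  by rewrite -(eu i) mulrC mulKf ?gt_eqF.
have Eu' i : u' ord0 i = b ord0 i / tau' ord0 i.
  by rewrite -(eu' i) mulrC mulKf ?gt_eqF.
pose T i := tau ord0 i * (b ord0 i / tau' ord0 i) + tau' ord0 i * (b ord0 i / tau ord0 i)
    - 2 * b ord0 i.
have sT : \sum_i T i = 0.
  rewrite /T sumrB big_split /=.
  have -> : \sum_i tau ord0 i * (b ord0 i / tau' ord0 i) = dotv tau u'.
    by apply: eq_bigr => i _; rewrite Eu'.
  have -> : \sum_i tau' ord0 i * (b ord0 i / tau ord0 i) = dotv tau' u.
    by apply: eq_bigr => i _; rewrite Eu.
  rewrite d1 d2 /dotv (eq_bigr _ (fun i _ => eu i)) (eq_bigr _ (fun i _ => eu' i)).
  by rewrite -mulr_sumr mulr2n mulrDl mul1r subrr.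
have T0 i : 0 <= - T i.
  rewrite /T quad // -mulNr; apply: mulr_ge0; first by rewrite oppr_ge0 ltW.
  by apply: divr_ge0; [apply: sqr_ge0 | apply: ltW; apply: mulr_gt0].
apply/rowP => i.
have : - T i = 0.
  apply: (@psumr_eq0P _ _ predT (fun i => - T i)) => //.
  by rewrite sumrN sT oppr0.
move/eqP; rewrite /T quad // oppr_eq0 mulf_eq0 (lt_eqF (hb i)) /= mulf_eq0 invr_eq0.
rewrite (gt_eqF (mulr_gt0 (pt i) (pt' i))) orbF sqrf_eq0 subr_eq0 => /eqP e.
by rewrite Eu Eu' e.
Qed.

From Stdlib Require Import ClassicalEpsilon.

Theorem corollary3 (R : realFieldType) (n m : nat)
    (v : 'M[R]_(n, m)) (b : 'rV[R]_n)
    (hv : forall i j, v i j < 0) (hb : forall i, b ord0 i < 0) :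
  (exists taus : seq 'rV[R]_n,
      (size taus <= (2 * m + 1) ^ ((n * (n - 1)) %/ 2))%N /\
      forall tau, pos_vec tau ->
        exists2 tau', tau' \in taus &
          forall u, face_of v tau u <-> face_of v tau' u) /\
  (exists us : seq 'rV[R]_n,
      (size us <= (2 * m + 1) ^ ((n * (n - 1)) %/ 2))%N /\
      forall u, CU v b u -> u \in us).
Proof.
pose rep (kap : {ffun Dom n -> 'I_(2 * m).+1}) : 'rV[R]_n :=
  epsilon (inhabits 0) (fun t => pos_vec t /\ key v t = kap).
pose taus := [seq rep kap | kap <- enum {: {ffun Dom n -> 'I_(2 * m).+1}}].
have hsz : size taus = ((2 * m + 1) ^ ((n * (n - 1)) %/ 2))%N.
  by rewrite size_map -cardE card_ffun card_ord card_Dom addn1.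
have hrep tau : pos_vec tau ->
    [/\ rep (key v tau) \in taus, pos_vec (rep (key v tau)) &
        key v (rep (key v tau)) = key v tau].
  move=> pt.
  have [] := @epsilon_spec _ (inhabits 0) (fun t => pos_vec t /\ key v t = key v tau)
    (ex_intro _ tau (conj pt erefl)).
  move=> h1 h2; split => //.
  by apply/mapP; exists (key v tau); rewrite ?mem_enum.
have hface tau : pos_vec tau ->
    forall u, face_of v tau u <-> face_of v (rep (key v tau)) u.
  move=> pt; have [_ pt' ek] := hrep tau pt.
  by apply: face_eq; apply: key_cmp => //; rewrite ek.
split.
  exists taus; split; first by rewrite hsz.
  move=> tau pt; exists (rep (key v tau)); first by have [] := hrep tau pt.
  exact: hface.
exists [seq epsilon (inhabits 0) (Good v b t) | t <- taus].
split; first by rewrite size_map hsz.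
move=> _ [z [cz ->]].
have [tau [pt S eb]] := comp_tau hv hb cz.
have G : Good v b (rep (key v tau)) (util v z).
  exists tau; split => //; first exact: hface.
  by apply/face_S; exists z; split => //; case: cz.
have G' := @epsilon_spec _ (inhabits 0) (Good v b (rep (key v tau))) (ex_intro _ _ G).
rewrite (good_uniq hb G G').
by apply/mapP; exists (rep (key v tau)) => //; have [] := hrep tau pt.
Qed.
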